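(* Every injective probabilistic metric space (i.e. injective $\Delta$-category) is exponentiable in $\mathsf{Cat}(\Delta)$; in particular the $\Delta$-category $(\Delta,\hom)$ is exponentiable in $\mathsf{Cat}(\Delta)$. Furthermore, the full subcategory of $\mathsf{Cat}(\Delta)$ consisting of all injective $\Delta$-categories is Cartesian closed.
   Context: $\Delta$ is the set of monotone maps $f:[0,\infty]\to[0,1]$ that are left continuous ($f(x)=\bigvee_{y<x}f(y)$), ordered pointwise; it is a quantale with $(f\otimes g)(t)=\bigvee_{r+s\le t}f(r)\cdot g(s)$ and neutral element $\varepsilon$ given by $\varepsilon(0)=0$, $\varepsilon(t)=1$ for $t>0$; $\hom(f,-)$ is the right adjoint of $f\otimes-$. A $\Delta$-category $(X,a)$ is a set with $a:X\times X\to\Delta$ such that $\varepsilon\le a(x,x)$ and $a(x,y)\otimes a(y,z)\le a(x,z)$; a $\Delta$-functor $f:(X,a)\to(Y,b)$ is a map with $a(x,y)\le b(f(x),f(y))$; these form $\mathsf{Cat}(\Delta)$. Fully faithful means $a(x,y)=b(f(x),f(y))$. Products in $\mathsf{Cat}(\Delta)$ have structure $a(x,x')\wedge b(y,y')$. For $\Delta$-functors $f,g:X\to Y$, $f\simeq g$ means $\varepsilon\le b(f(x),g(x))$ and $\varepsilon\le b(g(x),f(x))$ for all $x$. A $\Delta$-category $X$ is injective if for every fully faithful $i:A\to B$ and every $f:A\to X$ there is $g:B\to X$ with $g\cdot i\simeq f$. $X$ is exponentiable if $X\times-$ has a right adjoint. *)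

(* Defs.v *)
From HB Require Import structures.
From mathcomp Require Import all_boot all_order all_algebra.
From mathcomp Require Import boolp classical_sets reals.
Set Implicit Arguments. Unset Strict Implicit. Unset Printing Implicit Defensive.
Import Order.TTheory GRing.Theory Num.Theory.
Local Open Scope classical_set_scope.
Local Open Scope ring_scope.

Section Delta.
Variable R : realType.

(* An element of Delta is represented by its restriction to [0, oo), extended
   by 0 on the negative reals (f(0) = 0 is forced by left continuity, and the
   value at +oo is forced to be the sup of the finite values). *)
Definition isDelta (f : R -> R) : Prop :=
  [/\ (forall x, x <= 0 -> f x = 0),
      (forall x, 0 <= f x <= 1),
      (forall x y, x <= y -> f x <= f y) &
      (forall x, 0 < x -> f x = sup [set f y | y in [set y | y < x]])].

Definition dle (f g : R -> R) : Prop := forall t, 0 <= t -> f t <= g t.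
Definition deq (f g : R -> R) : Prop := forall t, 0 <= t -> f t = g t.

Definition eps : R -> R := fun t => if t <= 0 then 0 else 1.

Definition tensor (f g : R -> R) : R -> R := fun t =>
  sup [set x | exists r s, [/\ 0 <= r, 0 <= s, r + s <= t & x = f r * g s]].

(* hom(f,-), the right adjoint of f (x) - : the join of all h in Delta
   with f (x) h <= g *)
Definition homD (f g : R -> R) : R -> R := fun t =>
  sup [set x | exists h, [/\ isDelta h, dle (tensor f h) g & x = h t]].

Record DStruct := DStr { car : Type; dist : car -> car -> R -> R }.
Arguments dist : clear implicits.

Definition isDCat (X : DStruct) : Prop :=
  [/\ (forall x y, isDelta (dist X x y)),
      (forall x, dle eps (dist X x x)) &
      (forall x y z, dle (tensor (dist X x y) (dist X y z)) (dist X x z))].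

Definition functor (X Y : DStruct) (f : car X -> car Y) : Prop :=
  forall x x', dle (dist X x x') (dist Y (f x) (f x')).

Definition fully_faithful (X Y : DStruct) (f : car X -> car Y) : Prop :=
  forall x x', deq (dist X x x') (dist Y (f x) (f x')).

Definition meq (X Y : DStruct) (f g : car X -> car Y) : Prop :=
  forall x, f x = g x.

Definition fiso (X Y : DStruct) (f g : car X -> car Y) : Prop :=
  forall x, dle eps (dist Y (f x) (g x)) /\ dle eps (dist Y (g x) (f x)).

Definition dinjective (X : DStruct) : Prop :=
  forall (A B : DStruct) (i : car A -> car B), isDCat A -> isDCat B ->
    functor i -> fully_faithful i ->
    forall f : car A -> car X, functor f ->
      exists g : car B -> car X, functor g /\ fiso (g \o i) f.

Definition terminal_in (S : DStruct -> Prop) (T : DStruct) : Prop :=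
  S T /\ forall Z, S Z ->
    (exists f : car Z -> car T, functor f) /\
    (forall f g : car Z -> car T, functor f -> functor g -> meq f g).

Definition product_in (S : DStruct -> Prop) (X Y P : DStruct)
  (p1 : car P -> car X) (p2 : car P -> car Y) : Prop :=
  [/\ S P, functor p1, functor p2 &
    forall Z, S Z -> forall (f1 : car Z -> car X) (f2 : car Z -> car Y),
      functor f1 -> functor f2 ->
      (exists h : car Z -> car P, [/\ functor h, meq (p1 \o h) f1 & meq (p2 \o h) f2]) /\
      (forall h h' : car Z -> car P, functor h -> functor h' ->
         meq (p1 \o h) f1 -> meq (p2 \o h) f2 ->
         meq (p1 \o h') f1 -> meq (p2 \o h') f2 -> meq h h')].

(* g : Z -> E and a morphism h : Q -> P between products Q = X x Z, P = X x E
   realise "1_X x g", i.e. p1 h = q1 and p2 h = g q2 *)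
Definition is_idx (X Z E P Q : DStruct)
  (p1 : car P -> car X) (p2 : car P -> car E)
  (q1 : car Q -> car X) (q2 : car Q -> car Z)
  (g : car Z -> car E) (h : car Q -> car P) : Prop :=
  [/\ functor h, meq (p1 \o h) q1 & meq (p2 \o h) (g \o q2)].

(* X x - has a right adjoint in S, expressed through exponential objects
   (universal arrows from X x - to each Y), for arbitrary product cones. *)
Definition exponentiable_in (S : DStruct -> Prop) (X : DStruct) : Prop :=
  forall Y, S Y ->
  exists (E P : DStruct) (p1 : car P -> car X) (p2 : car P -> car E)
         (ev : car P -> car Y),
    [/\ S E, @product_in S X E P p1 p2, functor ev &
      forall Z, S Z ->
      forall (Q : DStruct) (q1 : car Q -> car X) (q2 : car Q -> car Z),
        @product_in S X Z Q q1 q2 ->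
        forall f : car Q -> car Y, functor f ->
          (exists g : car Z -> car E, functor g /\
             exists h, is_idx p1 p2 q1 q2 g h /\ meq (ev \o h) f) /\
          (forall g g' : car Z -> car E, functor g -> functor g' ->
             (exists h, is_idx p1 p2 q1 q2 g h /\ meq (ev \o h) f) ->
             (exists h', is_idx p1 p2 q1 q2 g' h' /\ meq (ev \o h') f) ->
             meq g g')].

Definition exponentiable (X : DStruct) : Prop := exponentiable_in isDCat X.

Definition cartesian_closed (S : DStruct -> Prop) : Prop :=
  [/\ (exists T, terminal_in S T),
      (forall X Y, S X -> S Y -> exists P p1 p2, @product_in S X Y P p1 p2) &
      (forall X, S X -> exponentiable_in S X)].

Definition InjCat (X : DStruct) : Prop := isDCat X /\ dinjective X.

Definition DeltaSet : Type := {f : R -> R | isDelta f}.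
Definition DeltaCat : DStruct :=
  @DStr DeltaSet (fun f g => homD (proj1_sig f) (proj1_sig g)).

End Delta.
Arguments dist {R}.

(* Main.v *)
Require Import Defs.
From HB Require Import structures.
From mathcomp Require Import all_boot all_order all_algebra.
From mathcomp Require Import boolp classical_sets reals.
From mathcomp Require Import lra.
Set Implicit Arguments. Unset Strict Implicit. Unset Printing Implicit Defensive.
Import Order.TTheory GRing.Theory Num.Theory.
Local Open Scope classical_set_scope.
Local Open Scope ring_scope.

Section Lib.
Variable R : realType.
Implicit Types (E : set R) (f g h : R -> R).
Local Notation eps := (@Defs.eps R).

Lemma supU E b x : (forall y, E y -> y <= b) -> E x -> x <= sup E.
Proof. by move=> Hb Ex; apply: ub_le_sup => //; exists b. Qed.

Lemma supL E K : (forall y, E y -> y <= K) -> 0 <= K -> sup E <= K.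
Proof.
move=> HK K0; case: (EM (E !=set0)) => [ne|ne].
  by apply: ge_sup.
by rewrite sup_out // => -[].
Qed.

Lemma supG E x : E !=set0 -> x < sup E -> exists y, E y /\ x < y.
Proof. by move=> ne /(sup_gt ne) [y Ey xy]; exists y. Qed.

Lemma sup_ge0 E : (forall y, E y -> 0 <= y) -> (forall y, E y -> y <= 1) -> 0 <= sup E.
Proof.
move=> H0 H1; case: (EM (E !=set0)) => [[y Ey]|ne].
  by apply: le_trans (H0 _ Ey) (supU H1 Ey).
by rewrite sup_out // => -[].
Qed.

Lemma sup_mulr_le E c K : 0 <= c -> 0 <= K -> (forall y, E y -> y * c <= K) ->
  sup E * c <= K.
Proof.
move=> c0 K0 H; case: (eqVneq c 0) => [->|cn0]; first by rewrite mulr0.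
have cp : 0 < c by rewrite lt_def cn0.
rewrite -ler_pdivlMr //; apply: supL; last by rewrite divr_ge0.
by move=> y Ey; rewrite ler_pdivlMr // H.
Qed.

Lemma sup_mull_le E c K : 0 <= c -> 0 <= K -> (forall y, E y -> c * y <= K) ->
  c * sup E <= K.
Proof. by move=> c0 K0 H; rewrite mulrC; apply: sup_mulr_le => // y /H; rewrite mulrC. Qed.


Lemma D0 f x : isDelta f -> x <= 0 -> f x = 0.
Proof. by case=> H *; apply: H. Qed.
Lemma Dge0 f x : isDelta f -> 0 <= f x.
Proof. by case=> _ H *; case/andP: (H x). Qed.
Lemma Dle1 f x : isDelta f -> f x <= 1.
Proof. by case=> _ H *; case/andP: (H x). Qed.
Lemma Dmono f x y : isDelta f -> x <= y -> f x <= f y.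
Proof. by case=> _ _ H *; apply: H. Qed.
Lemma Dlc f x : isDelta f -> 0 < x -> f x = sup [set f y | y in [set y | y < x]].
Proof. by case=> _ _ _ H; apply: H. Qed.

Lemma Dapprox f x v : isDelta f -> v < f x -> exists y, y < x /\ v < f y.
Proof.
move=> Df vf; have [x0|x0] := leP x 0.
  by move: vf; rewrite D0 // => v0; exists (x - 1); split; [lra|rewrite D0 //; lra].
move: vf; rewrite (Dlc Df x0) => /supG [].
  by exists (f (x - 1)); exists (x - 1) => //=; lra.
by move=> _ [[y /= yx <-] vy]; exists y.
Qed.

Lemma lc_intro f x : (forall y, y <= x -> f y <= f x) -> (forall y, f y <= 1) ->
  (forall y, 0 <= f y) ->
  (forall v, v < f x -> exists y, y < x /\ v < f y) ->
  f x = sup [set f y | y in [set y | y < x]].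
Proof.
move=> Hm H1 H0 Ha; apply/eqP; rewrite eq_le; apply/andP; split; last first.
  by apply: supL => [_ [y /= /ltW yx <-]|]; [apply: Hm|].
rewrite leNgt; apply/negP => /Ha [y [yx]]; apply/negP; rewrite -leNgt.
by apply: (supU (b := 1)) => [_ [z _ <-]//|]; exists y.
Qed.

Lemma isDelta_intro f : (forall x, x <= 0 -> f x = 0) -> (forall x, 0 <= f x) ->
  (forall x, f x <= 1) -> (forall x y, x <= y -> f x <= f y) ->
  (forall x v, 0 < x -> v < f x -> exists y, y < x /\ v < f y) -> isDelta f.
Proof.
move=> Hz H0 H1 Hm Ha; split => //; first by move=> x; rewrite H0 H1.
by move=> x x0; apply: lc_intro => //; [move=> y; exact: Hm|exact: (fun v => Ha x v x0)].
Qed.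

Lemma Dle_eps f : isDelta f -> dle f eps.
Proof. by move=> Df t t0; rewrite /eps; case: ifP => [t0'|_]; [rewrite D0|rewrite Dle1]. Qed.

Lemma eps_Delta : isDelta eps.
Proof.
apply: isDelta_intro; rewrite /eps.
- by move=> x ->.
- by move=> x; case: ifP.
- by move=> x; case: ifP.
- by move=> x y xy; case: (leP x 0) => hx; case: (leP y 0) => hy //; lra.
- move=> x v x0; case: (leP x 0) => hx; first lra.
  move=> v1; exists (x / 2); split; first lra.
  by case: (leP (x/2) 0) => h; lra.
Qed.

Lemma zero_Delta : isDelta (fun _ : R => 0 : R).
Proof. by apply: isDelta_intro => // x v _ v0; exists (x - 1); split; [lra|]. Qed.

Definition step (r a : R) : R -> R := fun t => if t <= r then 0 else a.

Lemma step_Delta r a : 0 <= r -> 0 <= a <= 1 -> isDelta (step r a).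
Proof.
move=> r0 /andP[a0 a1]; apply: isDelta_intro; rewrite /step.
- by move=> x x0; have ->: x <= r by apply: le_trans r0.
- by move=> x; case: ifP.
- by move=> x; case: ifP.
- by move=> x y xy; case: (leP x r) => hx; case: (leP y r) => hy //; lra.
- move=> x v x0; case: (leP x r) => [_ v0|rx va]; first by exists (x - 1); split; [lra|case: (leP (x - 1) r) => h; lra].
  exists ((x + r) / 2); split; first lra.
  by case: (leP ((x + r) / 2) r) => h; lra.
Qed.

Definition dmin f g : R -> R := fun t => Num.min (f t) (g t).

Lemma min_Delta f g : isDelta f -> isDelta g -> isDelta (dmin f g).
Proof.
move=> Df Dg; apply: isDelta_intro; rewrite /dmin.
- by move=> x x0; rewrite (D0 Df) // (D0 Dg) // minxx.
- by move=> x; rewrite le_min (Dge0 _ Df) (Dge0 _ Dg).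
- by move=> x; rewrite ge_min (Dle1 _ Df).
- by move=> x y xy; rewrite le_min !ge_min (Dmono Df xy) (Dmono Dg xy) orbT.
- move=> x v x0; rewrite lt_min => /andP[/(Dapprox Df) [y1 [y1x v1]] /(Dapprox Dg) [y2 [y2x v2]]].
  exists (Num.max y1 y2); split; first by rewrite gt_max y1x y2x.
  rewrite lt_min; apply/andP; split.
    by apply: lt_le_trans v1 (Dmono Df _); rewrite le_max lexx.
  by apply: lt_le_trans v2 (Dmono Dg _); rewrite le_max lexx orbT.
Qed.

Definition psup (F : set (R -> R)) : R -> R := fun t => sup [set w t | w in F].

Lemma psup_ub (F : set (R -> R)) w t : (forall w, F w -> isDelta w) -> F w -> w t <= psup F t.
Proof. by move=> HF Fw; apply: (supU (b := 1)) => [_ [w' Fw' <-]|]; [apply: Dle1; apply: HF|exists w]. Qed.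

Lemma psup_le (F : set (R -> R)) t K : 0 <= K -> (forall w, F w -> w t <= K) -> psup F t <= K.
Proof. by move=> K0 H; apply: supL => // _ [w Fw <-]; apply: H. Qed.

Lemma psup_ge0 (F : set (R -> R)) t : (forall w, F w -> isDelta w) -> 0 <= psup F t.
Proof. by move=> HF; apply: sup_ge0 => _ [w /HF Fw <-]; [apply: Dge0|apply: Dle1]. Qed.

Lemma psup_approx (F : set (R -> R)) t v : v < psup F t -> 0 <= v -> exists w, F w /\ v < w t.
Proof.
move=> vs v0; case: (EM ([set w t | w in F] !=set0)) => [ne|ne].
  by case: (supG ne vs) => _ [[w Fw <-] vw]; exists w.
by move: vs; rewrite /psup sup_out // => [|[]]; [lra|].
Qed.

Lemma psup_Delta (F : set (R -> R)) : (forall w, F w -> isDelta w) -> isDelta (psup F).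
Proof.
move=> HF; apply: isDelta_intro.
- move=> x x0; apply/eqP; rewrite eq_le psup_ge0 // andbT.
  by apply: psup_le => // w /HF Dw; rewrite D0.
- by move=> x; apply: psup_ge0.
- by move=> x; apply: psup_le => // w /HF/Dle1.
- move=> x y xy; apply: psup_le; first exact: psup_ge0.
  by move=> w Fw; apply: le_trans (Dmono (HF _ Fw) xy) (psup_ub _ HF Fw).
- move=> x v x0 vs; have [v0|v0] := ltP v 0.
    by exists 0; split => //; apply: lt_le_trans v0 (psup_ge0 _ HF).
  case: (psup_approx vs v0) => w [Fw vw].
  case: (Dapprox (HF _ Fw) vw) => y [yx vy]; exists y; split => //.
  by apply: lt_le_trans vy (psup_ub _ HF Fw).
Qed.

Lemma shrink (v p q : R) : 0 <= v -> v < p * q -> 0 <= p -> 0 <= q ->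
  exists a, a < p /\ v < a * q.
Proof.
move=> v0 vpq p0 q0; have qp : 0 < q.
  rewrite lt_def q0 andbT; apply/eqP => q0'; move: vpq; rewrite q0' mulr0; lra.
have h : v / q < p by rewrite ltr_pdivrMr.
exists ((v / q + p) / 2); split; first lra.
by rewrite -ltr_pdivrMr //; lra.
Qed.

Lemma Dpos f x : isDelta f -> 0 < f x -> 0 < x.
Proof. by move=> Df; case: (leP x 0) => // x0; rewrite (D0 Df x0) ltxx. Qed.

Section Tensor.
Variables f g : R -> R.
Hypotheses (Df : isDelta f) (Dg : isDelta g).

Lemma tensor_ub r s t : 0 <= r -> 0 <= s -> r + s <= t -> f r * g s <= tensor f g t.
Proof.
move=> r0 s0 rst; apply: (supU (b := 1)); last by exists r, s.
move=> _ [r' [s' [r0' s0' _ ->]]].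
by rewrite -[1]mul1r ler_pM ?(Dge0 _ Df) ?(Dge0 _ Dg) ?(Dle1 _ Df) ?(Dle1 _ Dg).
Qed.

Lemma tensor_le t K : 0 <= K ->
  (forall r s, 0 <= r -> 0 <= s -> r + s <= t -> f r * g s <= K) -> tensor f g t <= K.
Proof. by move=> K0 H; apply: supL => // _ [r [s [r0 s0 rst ->]]]; apply: H. Qed.

Lemma tensor_ge0 t : 0 <= tensor f g t.
Proof.
apply: sup_ge0 => _ [r [s [r0 s0 rst ->]]]; first by rewrite mulr_ge0 ?(Dge0 _ Df) ?(Dge0 _ Dg).
by rewrite -[1]mul1r ler_pM ?(Dge0 _ Df) ?(Dge0 _ Dg) ?(Dle1 _ Df) ?(Dle1 _ Dg).
Qed.

Lemma tensor_le1 t : tensor f g t <= 1.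
Proof.
apply: tensor_le => // r s *.
by rewrite -[1]mul1r ler_pM ?(Dge0 _ Df) ?(Dge0 _ Dg) ?(Dle1 _ Df) ?(Dle1 _ Dg).
Qed.

Lemma tensor_approx t v : 0 <= v -> v < tensor f g t ->
  exists r s, [/\ 0 < r, 0 < s, r + s < t & v < f r * g s].
Proof.
move=> v0 vt.
case: (EM ([set x | exists r s, [/\ 0 <= r, 0 <= s, r + s <= t & x = f r * g s]] !=set0)) => [ne|ne]; last first.
  by move: vt; rewrite /tensor sup_out // => [|[]]; [lra|].
case: (supG ne vt) => _ [[r [s [r0 s0 rst ->]]] vrs].
have [a [afr va]] := shrink v0 vrs (Dge0 _ Df) (Dge0 _ Dg).
have [r1 [r1r ar1]] := Dapprox Df afr.
have v1 : v < f r1 * g s.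
  apply: lt_le_trans va _; apply: ler_wpM2r; [exact: Dge0|exact: ltW].
have [b [bgs vb]] : exists b, b < g s /\ v < f r1 * b.
  have h : v < g s * f r1 by rewrite mulrC.
  have [b [h1 h2]] := shrink v0 h (Dge0 _ Dg) (Dge0 _ Df).
  by exists b; rewrite mulrC.
have [s1 [s1s bs1]] := Dapprox Dg bgs.
have v2 : v < f r1 * g s1.
  apply: lt_le_trans vb _; apply: ler_wpM2l; [exact: Dge0|exact: ltW].
have pos : 0 < f r1 * g s1 by apply: le_lt_trans v0 v2.
have fr1 : 0 < f r1.
  by rewrite lt_def Dge0 // andbT; apply/eqP => h; move: pos; rewrite h mul0r ltxx.
have gs1 : 0 < g s1.
  by rewrite lt_def Dge0 // andbT; apply/eqP => h; move: pos; rewrite h mulr0 ltxx.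
exists r1, s1; split => //; [exact: Dpos Df fr1|exact: Dpos Dg gs1|].
by apply: lt_le_trans rst; exact: ltr_leD r1r (ltW s1s).
Qed.

Lemma tensor_mono_t t t' : t <= t' -> tensor f g t <= tensor f g t'.
Proof.
move=> tt'; apply: tensor_le; first exact: tensor_ge0.
move=> r s r0 s0 rst; apply: tensor_ub => //; lra.
Qed.

Lemma tensor_Delta : isDelta (tensor f g).
Proof.
apply: isDelta_intro.
- move=> x x0; apply/eqP; rewrite eq_le tensor_ge0 andbT.
  apply: tensor_le => // r s r0 s0 rsx; have r0' : r <= 0 by lra.
  by rewrite (D0 Df r0') mul0r.
- exact: tensor_ge0.
- exact: tensor_le1.
- exact: tensor_mono_t.
- move=> x v x0 vx; have [v0|v0] := ltP v 0.
    by exists 0; split => //; apply: lt_le_trans v0 (tensor_ge0 _).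
  have [r [s [r0 s0 rsx vrs]]] := tensor_approx v0 vx.
  exists (r + s); split => //; apply: lt_le_trans vrs _; apply: tensor_ub; lra.
Qed.

End Tensor.

Lemma tensorC f g t : tensor f g t = tensor g f t.
Proof.
rewrite /tensor; congr sup; apply: funext => x; apply: propext.
by split => -[r [s [r0 s0 rst ->]]]; exists s, r; split => //; [rewrite addrC|rewrite mulrC|rewrite addrC|rewrite mulrC].
Qed.

Lemma tensor_mono f f' g g' : isDelta f -> isDelta f' -> isDelta g -> isDelta g' ->
  dle f f' -> dle g g' -> dle (tensor f g) (tensor f' g').
Proof.
move=> Df Df' Dg Dg' ff gg t t0; apply: tensor_le => //; first exact: tensor_ge0.
move=> r s r0 s0 rst; apply: le_trans (tensor_ub Df' Dg' r0 s0 rst).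
by apply: ler_pM; rewrite ?(Dge0 _ Df) ?(Dge0 _ Dg) ?ff ?gg.
Qed.

Lemma eps_pos t : 0 < t -> eps t = 1.
Proof. by rewrite /eps; case: leP => // h; lra. Qed.

Section Assoc.
Variables f g h : R -> R.
Hypotheses (Df : isDelta f) (Dg : isDelta g) (Dh : isDelta h).

Lemma tensorA1 : dle (tensor f (tensor g h)) (tensor (tensor f g) h).
Proof.
have Dfg := tensor_Delta Df Dg; have Dgh := tensor_Delta Dg Dh.
move=> t t0; apply: tensor_le => //; first exact: tensor_ge0.
move=> r s r0 s0 rst; apply: sup_mull_le; [exact: Dge0|exact: tensor_ge0|].
move=> _ [s1 [s2 [s10 s20 s12 ->]]]; rewrite mulrA.
apply: le_trans (_ : tensor f g (r + s1) * h s2 <= _).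
  by apply: ler_wpM2r; [exact: Dge0|apply: tensor_ub].
by apply: tensor_ub => //; [rewrite addr_ge0|lra].
Qed.

Lemma tensorA2 : dle (tensor (tensor f g) h) (tensor f (tensor g h)).
Proof.
have Dfg := tensor_Delta Df Dg; have Dgh := tensor_Delta Dg Dh.
move=> t t0; apply: tensor_le => //; first exact: tensor_ge0.
move=> r s r0 s0 rst; apply: sup_mulr_le; [exact: Dge0|exact: tensor_ge0|].
move=> _ [r1 [r2 [r10 r20 r12 ->]]]; rewrite -mulrA.
apply: le_trans (_ : f r1 * tensor g h (r2 + s) <= _).
  by apply: ler_wpM2l; [exact: Dge0|apply: tensor_ub].
by apply: tensor_ub => //; [rewrite addr_ge0|lra].
Qed.

End Assoc.

Lemma tensor_eps_r f t : isDelta f -> 0 <= t -> tensor f eps t = f t.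
Proof.
move=> Df t0; apply/eqP; rewrite eq_le; apply/andP; split.
  apply: tensor_le => [|r s r0 s0 rst]; first exact: Dge0.
  apply: le_trans (_ : f r * 1 <= _); first by apply: ler_wpM2l; [exact: Dge0|exact: Dle1 eps_Delta].
  by rewrite mulr1; apply: Dmono => //; lra.
have [t00|tp] := eqVneq t 0.
  by rewrite t00 (D0 Df) //; apply: tensor_ge0 => //; exact: eps_Delta.
have tp' : 0 < t by rewrite lt_def tp t0.
rewrite (Dlc Df tp'); apply: supL; last by apply: tensor_ge0 => //; exact: eps_Delta.
move=> _ [y /= yt <-]; have [y0|y0] := leP y 0.
  by rewrite (D0 Df y0); apply: tensor_ge0 => //; exact: eps_Delta.
rewrite -[f y]mulr1 -(eps_pos (_ : 0 < t - y)); last lra.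
by apply: tensor_ub => //; [exact: eps_Delta|lra|lra|lra].
Qed.

Lemma tensor_eps_l f t : isDelta f -> 0 <= t -> tensor eps f t = f t.
Proof. by move=> Df t0; rewrite tensorC tensor_eps_r. Qed.

Lemma dle_refl f : dle f f.
Proof. by move=> t _. Qed.

Lemma dleT f g h : dle f g -> dle g h -> dle f h.
Proof. by move=> H1 H2 t t0; apply: le_trans (H1 t t0) (H2 t t0). Qed.

Lemma tmono_l f f' g : isDelta f -> isDelta f' -> isDelta g -> dle f f' ->
  dle (tensor f g) (tensor f' g).
Proof. by move=> *; apply: tensor_mono => //; exact: dle_refl. Qed.

Lemma tmono_r f g g' : isDelta f -> isDelta g -> isDelta g' -> dle g g' ->
  dle (tensor f g) (tensor f g').
Proof. by move=> *; apply: tensor_mono => //; exact: dle_refl. Qed.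

Lemma eps_r_le f : isDelta f -> dle (tensor f eps) f.
Proof. by move=> Df t t0; rewrite tensor_eps_r. Qed.
Lemma eps_r_ge f : isDelta f -> dle f (tensor f eps).
Proof. by move=> Df t t0; rewrite tensor_eps_r. Qed.
Lemma eps_l_le f : isDelta f -> dle (tensor eps f) f.
Proof. by move=> Df t t0; rewrite tensor_eps_l. Qed.
Lemma eps_l_ge f : isDelta f -> dle f (tensor eps f).
Proof. by move=> Df t t0; rewrite tensor_eps_l. Qed.

Section DCat.
Variable X : DStruct R.
Hypothesis HX : isDCat X.
Lemma DC_D x y : isDelta (dist X x y). Proof. by case: HX. Qed.
Lemma DC_refl x : dle eps (dist X x x). Proof. by case: HX. Qed.
Lemma DC_trans x y z : dle (tensor (dist X x y) (dist X y z)) (dist X x z).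
Proof. by case: HX. Qed.
Lemma DC_comp u v x y z : isDelta u -> isDelta v -> dle u (dist X x y) ->
  dle v (dist X y z) -> dle (tensor u v) (dist X x z).
Proof.
move=> Du Dv H1 H2; apply: dleT (DC_trans x y z).
by apply: tensor_mono => //; exact: DC_D.
Qed.
Lemma DC_below x f : isDelta f -> dle f (dist X x x).
Proof. by move=> Df; apply: dleT (Dle_eps Df) (DC_refl x). Qed.
End DCat.

Definition prodS (X Y : DStruct R) : DStruct R :=
  @DStr R (car X * car Y)%type (fun p q => dmin (dist X p.1 q.1) (dist Y p.2 q.2)).

Lemma dmin_l f g : dle (dmin f g) f.
Proof. by move=> t _; rewrite /dmin ge_min lexx. Qed.
Lemma dmin_r f g : dle (dmin f g) g.
Proof. by move=> t _; rewrite /dmin ge_min lexx orbT. Qed.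
Lemma dmin_glb f g h : dle h f -> dle h g -> dle h (dmin f g).
Proof. by move=> H1 H2 t t0; rewrite /dmin le_min H1 ?H2. Qed.

Lemma prod_DCat X Y : isDCat X -> isDCat Y -> isDCat (prodS X Y).
Proof.
move=> HX HY; split.
- by move=> p q; apply: min_Delta; [exact: DC_D|exact: DC_D].
- by move=> p; apply: dmin_glb; apply: DC_refl.
- move=> p q r /=; have DX := DC_D HX; have DY := DC_D HY.
  apply: dmin_glb.
    by apply: (DC_comp HX) => //; try apply: min_Delta => //; exact: dmin_l.
  by apply: (DC_comp HY) => //; try apply: min_Delta => //; exact: dmin_r.
Qed.

Definition extS (X : DStruct R) (x0 x2 : car X) (p q : R -> R) : DStruct R :=
  @DStr R (option (car X)) (fun o o' => match o, o' with
    | Some x, Some x' => dist X x x'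
    | Some x, None => tensor (dist X x x0) p
    | None, Some x => tensor q (dist X x2 x)
    | None, None => eps end).

Lemma extS_DCat X x0 x2 p q : isDCat X -> isDelta p -> isDelta q ->
  dle (tensor p q) (dist X x0 x2) -> isDCat (extS x0 x2 p q).
Proof.
move=> HX Dp Dq pq; have DX := DC_D HX.
have Dd : forall o o', isDelta (dist (extS x0 x2 p q) o o').
  by case=> [x|] [x'|] /=; try apply: tensor_Delta => //; [exact: DX|exact: eps_Delta].
split => //.
- by case=> [x|] /=; [exact: DC_refl|exact: dle_refl].
- case=> [x|] [y|] [z|] /=.
  + exact: (DC_trans HX).
  + apply: dleT (tensorA1 (DX _ _) (DX _ _) Dp) _.
    by apply: tmono_l; [exact: tensor_Delta (DX _ _) (DX _ _)|exact: DX|exact: Dp|exact: (DC_trans HX)].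
  + apply: dleT (tensorA1 (tensor_Delta (DX _ _) Dp) Dq (DX _ _)) _.
    apply: (DC_comp HX (y := x2)); [exact: tensor_Delta (tensor_Delta (DX _ _) Dp) Dq|exact: DX|idtac|exact: dle_refl].
    apply: dleT (tensorA2 (DX _ _) Dp Dq) _.
    by apply: (DC_comp HX (y := x0)); [exact: DX|exact: tensor_Delta Dp Dq|exact: dle_refl|exact: pq].
  + exact: eps_r_le (tensor_Delta (DX _ _) Dp).
  + apply: dleT (tensorA2 Dq (DX _ _) (DX _ _)) _.
    by apply: tmono_r; [exact: Dq|exact: tensor_Delta (DX _ _) (DX _ _)|exact: DX|exact: (DC_trans HX)].
  + by apply: Dle_eps; apply: tensor_Delta; apply: tensor_Delta.
  + exact: eps_l_le (tensor_Delta Dq (DX _ _)).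
  + exact: Dle_eps (tensor_Delta eps_Delta eps_Delta).
Qed.

Section Interp.
Variables (X Y : DStruct R).
Hypotheses (HX : isDCat X) (IX : dinjective X) (HY : isDCat Y).
Variables (phi psi chi : car X -> car Y) (u v : R -> R).
Hypotheses (Du : isDelta u) (Dv : isDelta v).
Hypothesis Hu : forall x x' t, 0 <= t -> Num.min (u t) (dist X x x' t) <= dist Y (phi x) (psi x') t.
Hypothesis Hv : forall x x' t, 0 <= t -> Num.min (v t) (dist X x x' t) <= dist Y (psi x) (chi x') t.
Variables (x0 x2 : car X) (t : R).

Lemma interp_core r s : 0 < r -> 0 < s -> r + s < t ->
  Num.min (u r * v s) (dist X x0 x2 (r + s)) <= dist Y (phi x0) (chi x2) t.
Proof.
move=> r0 s0 rst.
have DX := DC_D HX; have DY := DC_D HY.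
set c := dist X x0 x2; set m := c (r + s); set a := u r.
have a0 : 0 <= a by exact: Dge0.
have a1 : a <= 1 by exact: Dle1.
have m0 : 0 <= m by exact: Dge0 (DX _ _).
have vs0 : 0 <= v s by exact: Dge0.
have vs1 : v s <= 1 by exact: Dle1.
have B0 : 0 <= dist Y (phi x0) (chi x2) t by exact: Dge0 (DY _ _).
have [az|anz] := eqVneq a 0.
  by rewrite az mul0r ge_min B0.
have ap : 0 < a by rewrite lt_def anz a0.
pose b := if a * v s <= m then v s else m / a.
have hb : [/\ 0 <= b, b <= v s & a * b = Num.min (a * v s) m].
  rewrite /b; case: ifP => h.
    by split => //; rewrite min_l.
  move/negbT: h; rewrite -ltNge => h; split.
  - by rewrite divr_ge0 // ltW.
  - by rewrite ler_pdivrMr // mulrC ltW.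
  - by rewrite mulrC divfK // ?min_r // ?ltW //; apply/eqP => h0; move: ap; rewrite h0 ltxx.
case: hb => b0 bvs hab.
have b1 : b <= 1 by apply: le_trans bvs vs1.
have Dp : isDelta (step r a) by apply: step_Delta; [exact: ltW|rewrite a0 a1].
have Dq : isDelta (step s b) by apply: step_Delta; [exact: ltW|rewrite b0 b1].
have pq : dle (tensor (step r a) (step s b)) c.
  move=> t' t'0; apply: tensor_le => //; first exact: Dge0 (DX _ _).
  move=> r' s' r'0 s'0 rst'; rewrite /step.
  case: (leP r' r) => h1; first by rewrite mul0r; exact: Dge0 (DX _ _).
  case: (leP s' s) => h2; first by rewrite mulr0; exact: Dge0 (DX _ _).
  apply: le_trans (_ : m <= _); first by rewrite hab ge_min lexx orbT.
  by apply: Dmono; [exact: DX|lra].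
have HE := extS_DCat HX Dp Dq pq.
have [g [fg isog]] := IX (A := X) (B := extS x0 x2 (step r a) (step s b)) (i := @Some (car X)) HX HE
  (fun x x' => dle_refl _) (fun x x' t _ => erefl) (f := id) (fun x x' => dle_refl _).
set x1 := g None.
have P1 : dle (step r a) (dist X x0 x1).
  apply: dleT (eps_l_ge Dp) _.
  apply: (DC_comp HX (y := g (Some x0))); [exact: eps_Delta|exact: Dp|exact: (isog x0).2|].
  apply: dleT (fg (Some x0) None); rewrite /=.
  apply: dleT (eps_l_ge Dp) _.
  by apply: tmono_l; [exact: eps_Delta|exact: DX|exact: Dp|exact: DC_refl].
have P2 : dle (step s b) (dist X x1 x2).
  apply: dleT (eps_r_ge Dq) _.
  apply: (DC_comp HX (y := g (Some x2))); [exact: Dq|exact: eps_Delta| |exact: (isog x2).1].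
  apply: dleT (fg None (Some x2)); rewrite /=.
  apply: dleT (eps_r_ge Dq) _.
  by apply: tmono_r; [exact: Dq|exact: eps_Delta|exact: DX|exact: DC_refl].
pose d := (t - (r + s)) / 2.
have d0 : 0 < d by rewrite /d; lra.
have Q1 : a <= dist Y (phi x0) (psi x1) (r + d).
  apply: le_trans (Hu _ _ _); last lra.
  rewrite le_min; apply/andP; split; first by apply: Dmono => //; lra.
  apply: le_trans (P1 _ _); last lra.
  by rewrite /step; case: (leP (r + d) r) => //; lra.
have Q2 : b <= dist Y (psi x1) (chi x2) (s + d).
  apply: le_trans (Hv _ _ _); last lra.
  rewrite le_min; apply/andP; split; first by apply: le_trans bvs _; apply: Dmono => //; lra.
  apply: le_trans (P2 _ _); last lra.
  by rewrite /step; case: (leP (s + d) s) => //; lra.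
rewrite -hab.
have t0 : 0 <= t by lra.
apply: le_trans (DC_trans HY (phi x0) (psi x1) (chi x2) t0).
have hd : (r + d) + (s + d) <= t by rewrite /d; lra.
apply: le_trans (tensor_ub (DY _ _) (DY _ _) _ _ hd); try lra.
by apply: ler_pM.
Qed.

Lemma interp : 0 <= t ->
  Num.min (tensor u v t) (dist X x0 x2 t) <= dist Y (phi x0) (chi x2) t.
Proof.
move=> t0; have DX := DC_D HX; have DY := DC_D HY.
have B0 : 0 <= dist Y (phi x0) (chi x2) t by exact: Dge0 (DY _ _).
rewrite leNgt; apply/negP; rewrite lt_min => /andP[hU hC].
have [y1 [y1t By1]] := Dapprox (DX x0 x2) hC.
have [r [s [r0 s0 rst Brs]]] := tensor_approx Du Dv B0 hU.
pose z := Num.max (r + s) y1.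
have zt : z < t by rewrite gt_max rst y1t.
have rsz : r + s <= z by rewrite le_max lexx.
have y1z : y1 <= z by rewrite le_max lexx orbT.
have := interp_core (r := r + (z - (r + s))) (s := s) _ s0 _.
have -> : r + (z - (r + s)) + s = z by lra.
move=> /(_ _ _) H; have {}H := H ltac:(lra) ltac:(lra).
move: H; apply/negP; rewrite -ltNge lt_min; apply/andP; split.
  apply: lt_le_trans Brs _; apply: ler_wpM2r => //; first exact: Dge0.
  by apply: Dmono => //; lra.
by apply: lt_le_trans By1 _; apply: Dmono.
Qed.

End Interp.

End Lib.
Section Lib2.
Variable R : realType.
Implicit Types (E : set R) (f g h : R -> R).
Local Notation eps := (@Defs.eps R).
Local Notation eps_Delta := (@eps_Delta R).

Definition funS (X Y : DStruct R) := {phi : car X -> car Y | functor phi}.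
Definition expP (X Y : DStruct R) (phi psi : car X -> car Y) (w : R -> R) : Prop :=
  isDelta w /\ forall x x' t, 0 <= t -> Num.min (w t) (dist X x x' t) <= dist Y (phi x) (psi x') t.
Definition expS (X Y : DStruct R) : DStruct R :=
  @DStr R (funS X Y) (fun phi psi => psup (expP (sval phi) (sval psi))).

Section Exp.
Variables X Y : DStruct R.

Lemma expd_Delta (phi psi : funS X Y) : isDelta (dist (expS X Y) phi psi).
Proof. by apply: psup_Delta => w []. Qed.

Lemma expd_ge (phi psi : funS X Y) w : expP (sval phi) (sval psi) w ->
  dle w (dist (expS X Y) phi psi).
Proof. by move=> Hw t t0; apply: psup_ub => // w' []. Qed.

Lemma expd_prop (phi psi : funS X Y) : isDCat Y -> forall x x' t, 0 <= t ->
  Num.min (dist (expS X Y) phi psi t) (dist X x x' t) <= dist Y (sval phi x) (sval psi x') t.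
Proof.
move=> HY x x' t t0; rewrite leNgt; apply/negP; rewrite lt_min => /andP[h1 h2].
have B0 := Dge0 t (DC_D HY (sval phi x) (sval psi x')).
have [w [[Dw Hw] hw]] := psup_approx h1 B0.
by have := Hw x x' t t0; apply/negP; rewrite -ltNge lt_min hw h2.
Qed.

Lemma expS_DCat : isDCat X -> dinjective X -> isDCat Y -> isDCat (expS X Y).
Proof.
move=> HX IX HY; split.
- exact: expd_Delta.
- move=> phi; apply: expd_ge; split; first exact: eps_Delta.
  move=> x x' t t0; rewrite ge_min; apply/orP; right; exact: (svalP phi).
- move=> phi psi chi; apply: expd_ge; split.
    by apply: tensor_Delta; apply: expd_Delta.
  move=> x x' t t0; apply: (interp HX IX HY (psi := sval psi)) => //; try exact: expd_Delta.
  + by move=> *; apply: expd_prop.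
  + by move=> *; apply: expd_prop.
Qed.

End Exp.

Lemma functor_pair (Z X Y : DStruct R) (f1 : car Z -> car X) (f2 : car Z -> car Y) :
  functor f1 -> functor f2 -> functor (fun z => (f1 z, f2 z) : car (prodS X Y)).
Proof. by move=> F1 F2 z z'; apply: dmin_glb; [exact: F1|exact: F2]. Qed.

Lemma functor_comp (X Y Z : DStruct R) (f : car X -> car Y) (g : car Y -> car Z) :
  functor f -> functor g -> functor (g \o f).
Proof. by move=> F G x x'; apply: dleT (F x x') (G _ _). Qed.

Section Univ.
Variable S : DStruct R -> Prop.
Hypothesis SD : forall Z, S Z -> isDCat Z.
Hypothesis Sprod : forall Z W, S Z -> S W -> S (prodS Z W).

Lemma prod_is_product X Y : S X -> S Y ->
  @product_in R S X Y (prodS X Y) fst snd.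
Proof.
move=> SX SY; split.
- exact: Sprod.
- by move=> p q; exact: dmin_l.
- by move=> p q; exact: dmin_r.
- move=> Z SZ f1 f2 F1 F2; split.
    by exists (fun z => (f1 z, f2 z)); split => //; exact: functor_pair.
  move=> h h' _ _ e1 e2 e1' e2' z.
  rewrite (surjective_pairing (h z)) (surjective_pairing (h' z)).
  by move: (e1 z) (e2 z) (e1' z) (e2' z) => /= -> -> -> ->.
Qed.

Lemma exp_univ X Y : S X -> S Y -> S (expS X Y) -> isDCat (expS X Y) ->
  exists (E P : DStruct R) (p1 : car P -> car X) (p2 : car P -> car E)
         (ev : car P -> car Y),
    [/\ S E, @product_in R S X E P p1 p2, functor ev &
      forall Z, S Z ->
      forall (Q : DStruct R) (q1 : car Q -> car X) (q2 : car Q -> car Z),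
        @product_in R S X Z Q q1 q2 ->
        forall f : car Q -> car Y, functor f ->
          (exists g : car Z -> car E, functor g /\
             exists hq, is_idx p1 p2 q1 q2 g hq /\ meq (ev \o hq) f) /\
          (forall g g' : car Z -> car E, functor g -> functor g' ->
             (exists hq, is_idx p1 p2 q1 q2 g hq /\ meq (ev \o hq) f) ->
             (exists hq', is_idx p1 p2 q1 q2 g' hq' /\ meq (ev \o hq') f) ->
             meq g g')].
Proof.
move=> SX SY SE HE; have HX := SD SX; have HY := SD SY.
exists (expS X Y), (prodS X (expS X Y)), fst, snd, (fun p => sval p.2 p.1).
split => //.
- exact: prod_is_product.
- move=> [x phi] [x' psi] t t0 /=; rewrite /dmin minC; exact: expd_prop.
move=> Z SZ Q q1 q2 [SQ Fq1 Fq2 UQ] f Ff.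
have HZ := SD SZ; have HQ := SD SQ.
have [[k [Fk k1 k2]] _] := UQ (prodS X Z) (Sprod SX SZ) fst snd
  (fun p q => dmin_l _ _) (fun p q => dmin_r _ _).
have kq : forall q, k (q1 q, q2 q) = q.
  have [_ U] := UQ Q SQ q1 q2 Fq1 Fq2.
  move=> q; apply: (U (fun q => k (q1 q, q2 q)) id) => //.
  - by apply: (functor_comp (Y := prodS X Z)) => //; exact: functor_pair.
  - by move=> a b; exact: dle_refl.
  - by move=> q' /=; exact: (k1 (q1 q', q2 q')).
  - by move=> q' /=; exact: (k2 (q1 q', q2 q')).
pose gf z : car X -> car Y := fun x => f (k (x, z)).
have Fgf : forall z, functor (gf z).
  move=> z x x'; apply: dleT (Ff _ _); apply: dleT (Fk (x, z) (x', z)).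
  apply: dmin_glb; first exact: dle_refl.
  move=> t t0 /=; exact: (DC_below HZ z (DC_D HX x x') t0).
pose g z : funS X Y := exist _ (gf z) (Fgf z).
have Fg : functor (g : car Z -> car (expS X Y)).
  move=> z z'; apply: expd_ge; split; first exact: (DC_D HZ z z').
  move=> x x' t t0 /=; apply: le_trans (Ff _ _ t t0).
  by apply: le_trans (Fk (x, z) (x', z') t t0); rewrite /dmin /= minC.
split.
  exists g; split => //; exists (fun q => (q1 q, g (q2 q))); split.
    split => //; move=> a b; apply: dmin_glb; first exact: Fq1.
    by apply: dleT (Fq2 a b) (Fg _ _).
  by move=> q /=; rewrite /gf kq.
move=> g1 g2 F1 F2 [h [[Fh h1 h2] e]] [h' [[Fh' h1' h2'] e']] z.
have E : forall (gg : car Z -> funS X Y) (hh : car Q -> car (prodS X (expS X Y))),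
    meq (fst \o hh) q1 -> meq (snd \o hh) (gg \o q2) ->
    meq ((fun p : car (prodS X (expS X Y)) => sval p.2 p.1) \o hh) f ->
    forall x, sval (gg z) x = f (k (x, z)).
  move=> gg hh a b c x; have := c (k (x, z)); rewrite /=.
  move: (a (k (x, z))) (b (k (x, z))) => /= -> ->.
  by move: (k1 (x, z)) (k2 (x, z)) => /= -> ->.
move: (E g1 h h1 h2 e) (E g2 h' h1' h2' e').
case: (g1 z) => p1 P1; case: (g2 z) => p2 P2 /= H1 H2.
have ep : p1 = p2 by apply: funext => x; rewrite H1 H2.
by subst p2; congr exist; exact: Prop_irrelevance.
Qed.

End Univ.

Lemma prod_inj (X Y : DStruct R) : dinjective X -> dinjective Y -> dinjective (prodS X Y).
Proof.
move=> IX IY A B i HA HB Fi FFi f Ff.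
have [g1 [Fg1 iso1]] := IX A B i HA HB Fi FFi (fst \o f)
  (functor_comp (Y := prodS X Y) Ff (fun p q => dmin_l _ _)).
have [g2 [Fg2 iso2]] := IY A B i HA HB Fi FFi (snd \o f)
  (functor_comp (Y := prodS X Y) Ff (fun p q => dmin_r _ _)).
exists (fun b => (g1 b, g2 b)); split; first exact: functor_pair.
by move=> a; split; apply: dmin_glb; [exact: (iso1 a).1|exact: (iso2 a).1|exact: (iso1 a).2|exact: (iso2 a).2].
Qed.

Lemma exp_inj (X Y : DStruct R) : isDCat X -> isDCat Y -> dinjective Y -> dinjective (expS X Y).
Proof.
move=> HX HY IY A B i HA HB Fi FFi F FF.
pose i' := (fun p : car (prodS A X) => (i p.1, p.2) : car (prodS B X)).
have Fi' : functor i'.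
  move=> p q; apply: dmin_glb; [exact: dleT (dmin_l _ _) (Fi _ _)|exact: dmin_r].
have FFi' : fully_faithful i'.
  by move=> p q t t0; rewrite /= /dmin /= (FFi _ _ _ t0).
pose F' := (fun p : car (prodS A X) => sval (F p.1) p.2).
have FF' : functor F'.
  move=> [a x] [a' x'] t t0 /=.
  apply: le_trans (expd_prop (F a) (F a') HY x x' t0).
  rewrite /dmin /= le_min !ge_min lexx !orbT andbT; apply/orP; left.
  exact: FF a a' t t0.
have [G' [FG' isoG']] := IY (prodS A X) (prodS B X) i' (prod_DCat HA HX) (prod_DCat HB HX) Fi' FFi' F' FF'.
pose Gf b : car X -> car Y := fun x => G' (b, x).
have FGf : forall b, functor (Gf b).
  move=> b x x'; apply: dleT (FG' (b, x) (b, x')).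
  apply: dmin_glb; last exact: dle_refl.
  move=> t t0 /=; exact: (DC_below HB b (DC_D HX x x') t0).
pose G b : funS X Y := exist _ (Gf b) (FGf b).
exists (G : car B -> car (expS X Y)); split.
  move=> b b'; apply: expd_ge; split; first exact: (DC_D HB b b').
  by move=> x x' t t0 /=; apply: le_trans (FG' (b, x) (b', x') t t0).
move=> a; split; apply: expd_ge; (split; first exact: eps_Delta); move=> x x' t t0 /=.
  apply: le_trans (_ : dist X x x' t <= _); first by rewrite ge_min lexx orbT.
  apply: le_trans (DC_trans HY (G' (i a, x)) (sval (F a) x) (sval (F a) x') t0).
  rewrite -{1}(tensor_eps_l (DC_D HX x x') t0).
  apply: (tensor_mono eps_Delta (DC_D HY (G' (i a, x)) (sval (F a) x)) (DC_D HX x x') (DC_D HY (sval (F a) x) (sval (F a) x')) _ _ t0).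
    exact: (isoG' (a, x)).1.
  exact: (svalP (F a)).
apply: le_trans (_ : dist X x x' t <= _); first by rewrite ge_min lexx orbT.
apply: le_trans (DC_trans HY (sval (F a) x) (sval (F a) x') (G' (i a, x')) t0).
rewrite -{1}(tensor_eps_r (DC_D HX x x') t0).
apply: (tensor_mono (DC_D HX x x') (DC_D HY (sval (F a) x) (sval (F a) x')) eps_Delta (DC_D HY (sval (F a) x') (G' (i a, x'))) _ _ t0).
  exact: (svalP (F a)).
exact: (isoG' (a, x')).2.
Qed.

Lemma homD_eq f g : homD f g = psup [set h | isDelta h /\ dle (tensor f h) g].
Proof.
apply: funext => t; rewrite /homD /psup; congr sup; apply: funext => x; apply: propext.
split; first by move=> [h [Dh le ->]]; exists h.
by move=> [h [Dh le] <-]; exists h.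
Qed.

Lemma homD_Delta f g : isDelta (homD f g).
Proof. by rewrite homD_eq; apply: psup_Delta => h []. Qed.

Lemma homD_ge f g h : isDelta h -> dle (tensor f h) g -> dle h (homD f g).
Proof. by move=> Dh le t t0; rewrite homD_eq; apply: psup_ub => // w []. Qed.

Lemma homD_tensor f g : isDelta f -> isDelta g -> dle (tensor f (homD f g)) g.
Proof.
move=> Df Dg t t0; apply: tensor_le => [|r s r0 s0 rst]; first exact: Dge0.
rewrite homD_eq; apply: sup_mull_le; [exact: Dge0|exact: Dge0|].
move=> _ [w [Dw le] <-]; apply: le_trans (le t t0).
exact: tensor_ub.
Qed.

Lemma DeltaCat_DCat : isDCat (DeltaCat R).
Proof.
split.
- by move=> f g; exact: homD_Delta.
- by move=> [f Df]; apply: homD_ge; [exact: eps_Delta|exact: eps_r_le].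
- move=> [f Df] [g Dg] [h Dh] /=; apply: homD_ge.
    by apply: tensor_Delta; exact: homD_Delta.
  apply: dleT (tensorA1 Df (homD_Delta _ _) (homD_Delta _ _)) _.
  apply: dleT (homD_tensor Dg Dh).
  apply: tmono_l; [exact: tensor_Delta (homD_Delta _ _)|exact: Dg|exact: homD_Delta|].
  exact: homD_tensor.
Qed.

Lemma DeltaCat_inj : dinjective (DeltaCat R).
Proof.
move=> A B i HA HB Fi FFi F FF.
pose Fs := fun b => [set y | exists a, y = tensor (sval (F a)) (dist B (i a) b)].
have DFs : forall b w, Fs b w -> isDelta w.
  by move=> b w [a ->]; apply: tensor_Delta; [exact: (svalP (F a))|exact: (DC_D HB _ _)].
pose G b : DeltaSet R := exist _ (psup (Fs b)) (psup_Delta (DFs b)).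
have Gub : forall a b, dle (tensor (sval (F a)) (dist B (i a) b)) (psup (Fs b)).
  by move=> a b t t0; apply: psup_ub; [exact: DFs|exists a].
exists (G : car B -> car (DeltaCat R)); split.
  move=> b b'; apply: homD_ge; first exact: (DC_D HB b b').
  move=> t t0.
change (tensor (psup (Fs b)) (dist B b b') t <= psup (Fs b') t).
apply: tensor_le => [|r s r0 s0 rst]; first exact: psup_ge0 _ (DFs b').
  apply: sup_mulr_le; [exact: Dge0 _ (DC_D HB b b')|exact: psup_ge0 _ (DFs b')|].
  move=> _ [w [a ->] <-].
  have Da := svalP (F a); have DB := DC_D HB.
  apply: le_trans (tensor_ub (tensor_Delta Da (DB _ _)) (DB _ _) r0 s0 rst) _.
  apply: le_trans (tensorA2 Da (DB _ _) (DB _ _) t0) _.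
  apply: le_trans (Gub a b' t t0).
  apply: (tmono_r Da (tensor_Delta (DB _ _) (DB _ _)) (DB _ _) _ t0).
  exact: (DC_trans HB (i a) b b').
move=> a; split => /=.
  apply: homD_ge; first exact: eps_Delta.
  apply: dleT (eps_r_le (psup_Delta (DFs _))) _.
  move=> t t0; apply: psup_le; first exact: Dge0 _ (svalP (F a)).
  move=> _ [a' ->].
  have Da := svalP (F a); have Da' := svalP (F a').
  apply: le_trans (homD_tensor Da' Da t0).
  apply: (tmono_r Da' (DC_D HB _ _) (homD_Delta _ _) _ t0).
  by move=> t' t'0; rewrite -(FFi a' a _ t'0); exact: FF a' a _ t'0.
apply: homD_ge; first exact: eps_Delta.
apply: dleT (Gub a (i a)).
apply: tmono_r; [exact: (svalP (F a))|exact: eps_Delta|exact: (DC_D HB _ _)|exact: (DC_refl HB (i a))].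
Qed.

Definition unitS : DStruct R := @DStr R unit (fun _ _ => eps).

Lemma unit_DCat : isDCat unitS.
Proof.
split => //=; [move=> *; exact: eps_Delta|move=> *; exact: dle_refl|].
by move=> *; apply: Dle_eps; apply: tensor_Delta; exact: eps_Delta.
Qed.

Lemma unit_inj : dinjective unitS.
Proof.
move=> A B i HA HB Fi FFi f Ff; exists (fun _ => tt); split.
  by move=> b b'; apply: Dle_eps; exact: (DC_D HB _ _).
by move=> a; split; exact: dle_refl.
Qed.
End Lib2.

Theorem theorem4p5 (R : realType) :
  [/\ (forall X : DStruct R, isDCat X -> dinjective X -> exponentiable X),
      isDCat (DeltaCat R) /\ exponentiable (DeltaCat R) &
      cartesian_closed (@InjCat R)].
Proof.
have part1 : forall X : DStruct R, isDCat X -> dinjective X -> exponentiable X.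
  move=> X HX IX Y HY.
  exact: (@exp_univ R (@isDCat R) (fun Z h => h) (@prod_DCat R) X Y HX HY
    (expS_DCat HX IX HY) (expS_DCat HX IX HY)).
split => //.
  split; first exact: DeltaCat_DCat.
  by apply: part1; [exact: DeltaCat_DCat|exact: DeltaCat_inj].
split.
- exists (@unitS R); split; first by split; [exact: unit_DCat|exact: unit_inj].
  move=> Z [HZ _]; split.
    by exists (fun _ => tt); move=> z z'; apply: Dle_eps; exact: (DC_D HZ _ _).
  by move=> f g _ _ z; case: (f z); case: (g z).
- move=> X Y [HX IX] [HY IY]; exists (prodS X Y), fst, snd.
  apply: (@prod_is_product R (@InjCat R)).
  + by move=> Z W [? ?] [? ?]; split; [exact: prod_DCat|exact: prod_inj].
  + by split.
  + by split.
- move=> X [HX IX] Y [HY IY].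
  apply: (@exp_univ R (@InjCat R)).
  + by move=> Z [].
  + by move=> Z W [? ?] [? ?]; split; [exact: prod_DCat|exact: prod_inj].
  + by split.
  + by split.
  + by split; [exact: expS_DCat|exact: exp_inj].
  + exact: expS_DCat.
Qed.
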